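(* Let $\mathcal{H}^c_{A_{n-1}}$ be the degenerate affine Hecke–Clifford algebra of type $A_{n-1}$. Let $\gamma=(\gamma_1,\dots,\gamma_k)$ be a composition of $n$, let $B_j=\{\gamma_1+\dots+\gamma_{j-1}+1,\dots,\gamma_1+\dots+\gamma_j\}$, and let $w_\gamma\in S_n$ be the product over $j$ of the cycles $(a\ \ a+1\ \cdots\ b)$ where $B_j=\{a,\dots,b\}$. Let $I\subseteq\{1,\dots,n\}$ with $|I|$ even, and $I_j=I\cap B_j$. If every $|I_j|$ is even, then $w_\gamma c_I-\epsilon w_\gamma\in[\mathcal{H}^c_{A_{n-1}},\mathcal{H}^c_{A_{n-1}}]$ for some $\epsilon\in\{1,-1\}$; otherwise $w_\gamma c_I\in[\mathcal{H}^c_{A_{n-1}},\mathcal{H}^c_{A_{n-1}}]$.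
   Context: $\mathcal{H}^c_{A_{n-1}}$ (parameter $u\in\mathbb{C}$) is the $\mathbb{C}$-algebra generated by commuting $x_1,\dots,x_n$, Clifford generators $c_1,\dots,c_n$ ($c_i^2=1$, $c_ic_j=-c_jc_i$ for $i\ne j$) and $S_n$ (simple reflections $s_i=(i,i+1)$), with $\mathbb{C}[x]$, the Clifford algebra and $\mathbb{C}S_n$ subalgebras and relations $x_ic_i=-c_ix_i$, $x_ic_j=c_jx_i$ ($i\ne j$), $\sigma c_i=c_{\sigma(i)}\sigma$ ($\sigma\in S_n$), $x_{i+1}s_i-s_ix_i=u(1-c_{i+1}c_i)$, $x_js_i=s_ix_j$ ($j\ne i,i+1$). A composition of $n$ is a sequence of positive integers summing to $n$. For $I=\{i_1<\dots<i_m\}$, $c_I=c_{i_1}\cdots c_{i_m}$. $[H,H]$ is the linear span of all $hh'-h'h$. *)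

(* Defs.v *)
From HB Require Import structures.
From mathcomp Require Import all_boot all_order all_fingroup all_algebra.
From mathcomp Require Import complex.
From mathcomp Require Import reals.
Set Implicit Arguments. Unset Strict Implicit. Unset Printing Implicit Defensive.
Import Order.TTheory GRing.Theory Num.Theory.
Local Open Scope ring_scope.

Definition in_comm_span (K : pzRingType) (A : lalgType K) (x : A) : Prop :=
  exists s : seq (K * A * A),
    x = \sum_(t <- s) t.1.1 *: (t.1.2 * t.2 - t.2 * t.1.2).

(* Simple transposition (a a+1) of {0,..,n-1} (0-based indices);
   identity if a+1 is out of range (never used then). *)
Definition sw (n : nat) (a : nat) : {perm 'I_n} :=
  match @insub _ (fun k => k < n)%N _ a, @insub _ (fun k => k < n)%N _ a.+1 with
  | Some i, Some j => tperm i j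
  | _, _ => 1%g
  end.

(* cyc a m = the cycle (a a+1 ... a+m-1) (a -> a+1 -> ... -> a+m-1 -> a),
   0-based, built as the composition s_a o s_{a+1} o ... o s_{a+m-2}.
   Recall that in mathcomp (s * t)%g x = t (s x), i.e. (s * t)%g = t o s. *)
Fixpoint cyc (n : nat) (a m : nat) : {perm 'I_n} :=
  match m with
  | 0 | 1 => 1%g
  | m'.+1 => (cyc n a.+1 m' * sw n a)%g
  end.

Fixpoint wgam_aux (n : nat) (off : nat) (g : seq nat) : {perm 'I_n} :=
  match g with
  | [::] => 1%g
  | b :: g' => (wgam_aux n (off + b) g' * cyc n off b)%g
  end.

Definition wgam (n : nat) (g : seq nat) : {perm 'I_n} := wgam_aux n 0 g.

Definition is_composition (n : nat) (g : seq nat) : Prop :=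
  all (fun b => 0 < b)%N g /\ sumn g = n.

(* 0-based block j : B_j = { i | sum_{l<j} g_l <= i < sum_{l<=j} g_l } *)
Definition in_block (g : seq nat) (j : nat) (i : nat) : bool :=
  (sumn (take j g) <= i < sumn (take j.+1 g))%N.

Definition cI (K : pzRingType) (A : lalgType K) (n : nat) (Cl : 'I_n -> A)
    (I : {set 'I_n}) : A :=
  \prod_(i < n | i \in I) Cl i.

(* Main.v *)
Require Import Defs.
From HB Require Import structures.
From mathcomp Require Import all_boot all_order all_fingroup all_algebra.
From mathcomp Require Import complex reals.
From mathcomp Require Import zify.
Set Implicit Arguments. Unset Strict Implicit. Unset Printing Implicit Defensive.

Definition cf (a m x : nat) : nat :=
  if (a <= x < a + m)%N then (if x.+1 == a + m then a else x.+1) else x.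

Lemma sw_val n a (y : 'I_n) : (a.+1 < n)%N ->
  val (sw n a y) = if val y == a then a.+1 else if val y == a.+1 then a else val y.
Proof.
move=> han; rewrite /sw.
case: insubP => [i _ ei|]; last by move=> /negP; case; lia.
case: insubP => [j _ ej|]; last by move=> /negP; case; lia.
case: (tpermP i j y) => [->|->|/eqP ny1 /eqP ny2]; rewrite ?ei ?ej ?eqxx //.
  by rewrite ifN //; apply/eqP; lia.
have h1 : val y != a by apply: contra ny1 => /eqP e; apply/eqP/val_inj; rewrite ei.
have h2 : val y != a.+1 by apply: contra ny2 => /eqP e; apply/eqP/val_inj; rewrite ej.
by rewrite (negbTE h1) (negbTE h2).
Qed.

Lemma cyc_val n a m (x : 'I_n) : (a + m <= n)%N -> val (cyc n a m x) = cf a m x.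
Proof.
elim: m a => [|m IH] a ham /=.
  by rewrite perm1 /cf; case: ifP => // h; exfalso; lia.
case: m IH ham => [|m] IH ham.
  rewrite perm1 /cf; case: ifP => // h; rewrite ifT; lia.
rewrite permM sw_val; last lia.
rewrite IH; last lia.
rewrite /cf.
case: (boolP (a < x < a.+1 + m.+1)) => c1; [case: (boolP (x.+1 == a.+1 + m.+1)) => c2|]; rewrite ?(negbTE c1) ?c1 ?(negbTE c2) ?c2 /=; repeat case: ifP; move=> *; lia.
Qed.

Fixpoint fw (off : nat) (g : seq nat) (x : nat) : nat :=
  match g with
  | [::] => x
  | b :: g' => if (off <= x < off + b)%N then cf off b x else fw (off + b) g' x
  end.

Lemma fw_out off g x : (x < off)%N -> fw off g x = x.
Proof.
elim: g off => [|b g IH] off hx //=.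
rewrite ifF; last lia. apply: IH; lia.
Qed.

Lemma fw_ge off g x : (off <= x)%N -> (off <= fw off g x)%N.
Proof.
elim: g off => [|b g IH] off hx //=.
case: ifP => h.
  rewrite /cf h; case: ifP; lia.
have := IH (off + b) ltac:(lia); lia.
Qed.

Lemma wgam_aux_val n off g (x : 'I_n) : (off + sumn g <= n)%N ->
  val (wgam_aux n off g x) = fw off g x.
Proof.
elim: g off => [|b g IH] off /= hn; first by rewrite perm1.
rewrite permM cyc_val; last lia.
rewrite IH; last lia.
case: ifP => h.
  by rewrite fw_out //; lia.
have [hx|hx] := ltnP x off.
  by rewrite fw_out ?(fw_out _ _ hx) /cf ?ifF //; lia.
have := fw_ge g (x := x) (off := off + b) ltac:(lia).
by rewrite /cf; case: ifP => //; lia.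
Qed.

Lemma fw_block off g j x :
  (off + sumn (take j g) <= x < off + sumn (take j.+1 g))%N ->
  fw off g x = cf (off + sumn (take j g)) (nth 0%N g j) x.
Proof.
elim: g off j => [|b g IH] off j /=; first by case: j; lia.
case: j => [|j] /=.
  rewrite take0 /= !addn0 => h; by rewrite h.
move=> h; rewrite ifF; last lia.
rewrite (IH _ j); first by rewrite addnA.
lia.
Qed.

Lemma sumn_take_mono (g : seq nat) i j : (i <= j)%N -> (sumn (take i g) <= sumn (take j g))%N.
Proof.
move=> hij; rewrite -(subnKC hij) takeD sumn_cat; lia.
Qed.

Lemma in_block_uniq g j j' x : in_block g j x -> in_block g j' x -> j = j'.
Proof.
rewrite /in_block => h1 h2.
have [hlt|hge] := ltnP j j'.
  have := sumn_take_mono g hlt; lia.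
have [hlt'|hge'] := ltnP j' j.
  have := sumn_take_mono g hlt'; lia.
lia.
Qed.

Lemma in_block_ex g x : (x < sumn g)%N -> exists2 j, (j < size g)%N & in_block g j x.
Proof.
rewrite /in_block.
elim: g x => [|b g IH] x //=.
have [hx|hx] := ltnP x b.
  by move=> _; exists 0%N => //=; rewrite take0 /=; lia.
move=> h; have [j hj hin] := IH (x - b)%N ltac:(lia).
exists j.+1 => //=; lia.
Qed.

Lemma cf_in a m x : (a <= x < a + m)%N -> (a <= cf a m x < a + m)%N.
Proof. by rewrite /cf => h; rewrite h; case: ifP; lia. Qed.

Lemma cf_out a m x : ~~ (a <= x < a + m)%N -> cf a m x = x.
Proof. by rewrite /cf => /negbTE ->. Qed.

Lemma cf_succ a m x : (a <= x)%N -> (x.+1 < a + m)%N -> cf a m x = x.+1.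
Proof. rewrite /cf => h1 h2; rewrite ifT; last lia. by rewrite ifF //; lia. Qed.

Import GRing.Theory Num.Theory.
Local Open Scope ring_scope.

Definition pm (A : pzRingType) (x y : A) := x = y \/ x = - y.

Lemma pm_refl (A : pzRingType) (x : A) : pm x x.
Proof. by left. Qed.
Lemma pm_sym (A : pzRingType) (x y : A) : pm x y -> pm y x.
Proof. by case=> ->; [left|right; rewrite opprK]. Qed.
Lemma pm_trans (A : pzRingType) (x y z : A) : pm x y -> pm y z -> pm x z.
Proof. by case=> ->; case=> ->; rewrite ?opprK; [left|right|right|left]. Qed.
Lemma pm_mull (A : pzRingType) (w x y : A) : pm x y -> pm (w * x) (w * y).
Proof. by case=> ->; [left|right; rewrite mulrN]. Qed.
Lemma pm_mulr (A : pzRingType) (w x y : A) : pm x y -> pm (x * w) (y * w).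
Proof. by case=> ->; [left|right; rewrite mulNr]. Qed.
Lemma pm_sign (A : pzRingType) (x : A) k : pm ((-1) ^+ k * x) x.
Proof. by rewrite -signr_odd; case: (odd k); rewrite ?expr1 ?expr0 ?mulN1r ?mul1r; [right|left]. Qed.
Lemma pm_opp (A : pzRingType) (x y : A) : pm x y -> pm x (- y).
Proof. by case=> ->; [right; rewrite opprK|left]. Qed.

Lemma sgC (A : pzRingType) k (x y : A) : x * ((-1) ^+ k * y) = (-1) ^+ k * (x * y).
Proof. by rewrite -signr_odd; case: (odd k); rewrite ?expr0 ?expr1 ?mul1r ?mulN1r ?mulrN. Qed.

Definition cl (A : pzRingType) n (Cl : 'I_n -> A) (l : seq 'I_n) := \prod_(i <- l) Cl i.

Lemma Cl_swap (A : pzRingType) n (Cl : 'I_n -> A)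
  (hCC : forall i, Cl i * Cl i = 1)
  (hCa : forall i j, i != j -> Cl i * Cl j = - (Cl j * Cl i)) a b :
  Cl a * Cl b = (-1) ^+ (a != b) * (Cl b * Cl a).
Proof.
case: eqVneq => [->|hab]; first by rewrite expr0 mul1r.
by rewrite hCa // expr1 mulN1r.
Qed.

Lemma Cl_cl (A : pzRingType) n (Cl : 'I_n -> A)
  (hCC : forall i, Cl i * Cl i = 1)
  (hCa : forall i j, i != j -> Cl i * Cl j = - (Cl j * Cl i)) a l :
  Cl a * cl Cl l = (-1) ^+ (count (predC1 a) l) * (cl Cl l * Cl a).
Proof.
elim: l => [|x l IH]; first by rewrite /cl big_nil expr0 mul1r mulr1 mul1r.
rewrite /cl big_cons -/(cl Cl l) /= mulrA (Cl_swap hCC hCa) -!mulrA IH.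
rewrite exprD -!mulrA; congr (_ * _).
  by rewrite eq_sym.
by rewrite sgC.
Qed.

Lemma cl_cat (A : pzRingType) n (Cl : 'I_n -> A) l1 l2 :
  cl Cl (l1 ++ l2) = cl Cl l1 * cl Cl l2.
Proof. by rewrite /cl big_cat. Qed.

Lemma cl_anti (A : pzRingType) n (Cl : 'I_n -> A)
  (hCC : forall i, Cl i * Cl i = 1)
  (hCa : forall i j, i != j -> Cl i * Cl j = - (Cl j * Cl i)) l1 l2 :
  (forall x, x \in l1 -> x \notin l2) ->
  cl Cl l1 * cl Cl l2 = (-1) ^+ (size l1 * size l2) * (cl Cl l2 * cl Cl l1).
Proof.
elim: l1 => [|x l1 IH] hd; first by rewrite /cl big_nil mul1r mulr1 mul0n expr0 mul1r.
rewrite /cl big_cons -/(cl Cl l1) -mulrA IH; last by move=> y hy; apply: hd; rewrite inE hy orbT.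
rewrite -/(cl Cl l2) sgC mulrA (Cl_cl hCC hCa).
have -> : count (predC1 x) l2 = size l2.
  apply/eqP; rewrite -all_count; apply/allP => y hy /=; apply/eqP => e.
  by move: (hd x (mem_head _ _)); rewrite -e hy.
rewrite -(mulrA ((-1) ^+ size l2)) mulrA -exprD -mulrA.
by rewrite mulSn addnC.
Qed.

Lemma cl_perm (A : pzRingType) n (Cl : 'I_n -> A)
  (hCC : forall i, Cl i * Cl i = 1)
  (hCa : forall i j, i != j -> Cl i * Cl j = - (Cl j * Cl i)) l1 l2 :
  perm_eq l1 l2 -> pm (cl Cl l1) (cl Cl l2).
Proof.
elim: l1 l2 => [|x l1 IH] l2.
  by rewrite perm_sym => /perm_nilP ->; apply: pm_refl.
move=> hp.
have hx : x \in l2 by rewrite -(perm_mem hp) mem_head.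
case/splitPr: hx hp => p1 p2 hp.
have hp' : perm_eq l1 (p1 ++ p2).
  by rewrite -(perm_cons x); apply: (perm_trans hp); rewrite -cat1s perm_catCA.
rewrite /cl big_cons big_cat big_cons /= -/(cl Cl l1) -/(cl Cl p1) -/(cl Cl p2).
apply: (pm_trans (pm_mull _ (IH _ hp'))).
rewrite cl_cat mulrA (Cl_cl hCC hCa) -!mulrA.
by apply: pm_sign.
Qed.

Definition tg n (S : {set 'I_n}) a := if a \in S then S :\ a else a |: S.

Lemma cI_enum (A : pzRingType) n (Cl : 'I_n -> A) (S : {set 'I_n}) :
  \prod_(i < n | i \in S) Cl i = cl Cl (enum S).
Proof. by rewrite /cl /enum_mem big_filter. Qed.

Lemma cl_mull (A : pzRingType) n (Cl : 'I_n -> A)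
  (hCC : forall i, Cl i * Cl i = 1)
  (hCa : forall i j, i != j -> Cl i * Cl j = - (Cl j * Cl i)) a (S : {set 'I_n}) :
  pm (Cl a * cl Cl (enum S)) (cl Cl (enum (tg S a))).
Proof.
rewrite /tg; case: ifP => ha.
  have hp : perm_eq (enum S) (a :: enum (S :\ a)).
    apply: uniq_perm; rewrite /= ?enum_uniq ?mem_enum ?in_setD1 ?eqxx ?andbT //.
    by move=> x; rewrite inE !mem_enum in_setD1; case: eqVneq => // ->.
  apply: pm_trans (pm_mull _ (cl_perm hCC hCa hp)) _.
  by rewrite /cl big_cons mulrA hCC mul1r; apply: pm_refl.
have hp : perm_eq (a :: enum S) (enum (a |: S)).
  apply: uniq_perm; rewrite /= ?enum_uniq ?mem_enum ?ha //.
  by move=> x; rewrite inE !mem_enum in_setU1.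
by have := cl_perm hCC hCa hp; rewrite /cl big_cons.
Qed.

Lemma cl_mulr (A : pzRingType) n (Cl : 'I_n -> A)
  (hCC : forall i, Cl i * Cl i = 1)
  (hCa : forall i j, i != j -> Cl i * Cl j = - (Cl j * Cl i)) a (S : {set 'I_n}) :
  pm (cl Cl (enum S) * Cl a) (cl Cl (enum (tg S a))).
Proof.
apply: pm_trans (cl_mull hCC hCa a S).
rewrite (Cl_cl hCC hCa); apply: pm_sym; apply: pm_sign.
Qed.

Lemma cl_split (A : pzRingType) n (Cl : 'I_n -> A)
  (hCC : forall i, Cl i * Cl i = 1)
  (hCa : forall i j, i != j -> Cl i * Cl j = - (Cl j * Cl i)) (S P : {set 'I_n}) :
  pm (cl Cl (enum S)) (cl Cl (enum (S :\: P)) * cl Cl (enum (S :&: P))).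
Proof.
rewrite -cl_cat; apply: cl_perm => //.
apply: uniq_perm; rewrite ?cat_uniq ?enum_uniq //=.
  rewrite andbT; apply/hasPn => x; rewrite !mem_enum !inE => /andP [_ ->] /=.
  by [].
move=> x; rewrite mem_cat !mem_enum !inE. by case: (x \in S); case: (x \in P).
Qed.

Lemma cl_anti_set (A : pzRingType) n (Cl : 'I_n -> A)
  (hCC : forall i, Cl i * Cl i = 1)
  (hCa : forall i j, i != j -> Cl i * Cl j = - (Cl j * Cl i)) (P Q : {set 'I_n}) :
  [disjoint P & Q] ->
  cl Cl (enum P) * cl Cl (enum Q) = (-1) ^+ (#|P| * #|Q|) * (cl Cl (enum Q) * cl Cl (enum P)).
Proof.
move=> hd; rewrite (cl_anti hCC hCa) ?cardE // => x; rewrite !mem_enum => hx.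
by rewrite (disjointFr hd hx).
Qed.

Lemma span0 (K : pzRingType) (A : lalgType K) : in_comm_span (0 : A).
Proof. by exists [::]; rewrite big_nil. Qed.

Lemma spanD (K : pzRingType) (A : lalgType K) (x y : A) :
  in_comm_span x -> in_comm_span y -> in_comm_span (x + y).
Proof. by move=> [s ->] [t ->]; exists (s ++ t); rewrite big_cat. Qed.

Lemma spanZ (K : pzRingType) (A : lalgType K) (k : K) (x : A) :
  in_comm_span x -> in_comm_span (k *: x).
Proof.
move=> [s ->]; exists [seq (k * t.1.1, t.1.2, t.2) | t <- s].
rewrite big_map scaler_sumr; apply: eq_bigr => t _ /=; by rewrite scalerA.
Qed.

Lemma spanN (K : pzRingType) (A : lalgType K) (x : A) :
  in_comm_span x -> in_comm_span (- x).
Proof. by move=> h; rewrite -scaleN1r; apply: spanZ. Qed.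

Lemma span_comm (K : pzRingType) (A : lalgType K) (a b : A) :
  in_comm_span (a * b - b * a).
Proof. by exists [:: (1, a, b)]; rewrite big_seq1 /= scale1r. Qed.

Lemma span_anti (K : numFieldType) (A : lalgType K) (a b : A) :
  b * a = - (a * b) -> in_comm_span (a * b).
Proof.
move=> h.
have -> : a * b = (2%:R^-1 : K) *: (a * b - b * a).
  rewrite h opprK scalerDr -scalerDl.
  have -> : (2%:R^-1 + 2%:R^-1 : K) = 1.
    by rewrite [RHS](splitr 1) mul1r.
  by rewrite scale1r.
by apply: spanZ; apply: span_comm.
Qed.

Lemma card_tg n (S : {set 'I_n}) a : odd #|tg S a| = ~~ odd #|S|.
Proof.
rewrite /tg; case: ifP => ha.
  by rewrite (cardsD1 a S) ha /= negbK.
by rewrite cardsU1 ha.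
Qed.

Lemma in_tg n (S : {set 'I_n}) a i : (i \in tg S a) = (i == a) (+) (i \in S).
Proof.
rewrite /tg; case: ifP => ha; rewrite !inE; case: eqVneq => [->|] //=; by rewrite ha.
Qed.

Lemma odd_tg n (S : {set 'I_n}) (P : pred 'I_n) a :
  odd #|[set i in tg S a | P i]| = odd #|[set i in S | P i]| (+) P a.
Proof.
case: (boolP (P a)) => hP.
  have -> : [set i in tg S a | P i] = tg [set i in S | P i] a.
    apply/setP => i; rewrite in_tg !inE in_tg.
    by case: (eqVneq i a) => [->|] //=; rewrite hP !andbT.
  by have := card_tg [set i in S | P i] a; rewrite addbT => ->.
have -> : [set i in tg S a | P i] = [set i in S | P i].
  apply/setP => i; rewrite !inE in_tg.
  by case: (eqVneq i a) => [->|] //=; rewrite (negbTE hP) !andbF.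
by rewrite addbF.
Qed.

Lemma sp_comb1 (K : pzRingType) (A : lalgType K) (a b c : A) :
  in_comm_span (a - b) -> in_comm_span (a - c) -> in_comm_span (b - c).
Proof.
move=> h1 h2; have -> : b - c = -(a - b) + (a - c) by rewrite opprB addrA subrK.
by apply: spanD => //; apply: spanN.
Qed.

Lemma sp_comb2 (K : pzRingType) (A : lalgType K) (a b c : A) :
  in_comm_span (- a - b) -> in_comm_span (a - c) -> in_comm_span (b - - c).
Proof.
move=> h1 h2; have -> : b - - c = -(- a - b) + - (a - c).
  by rewrite opprB opprK opprB opprK addrACA subrr addr0.
by apply: spanD; apply: spanN.
Qed.

Lemma T_cl_comm (A : pzRingType) n (Cl : 'I_n -> A) (T : {perm 'I_n} -> A)
  (hTC : forall (s : {perm 'I_n}) i, T s * Cl i = Cl (s i) * T s) (s : {perm 'I_n}) (l : seq 'I_n) :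
  (forall i, i \in l -> s i = i) -> T s * cl Cl l = cl Cl l * T s.
Proof.
elim: l => [|a l IH] h; first by rewrite /cl big_nil mul1r mulr1.
rewrite /cl big_cons -/(cl Cl l) mulrA hTC h ?mem_head // -!mulrA IH //.
by move=> i hi; apply: h; rewrite inE hi orbT.
Qed.

Unset Implicit Arguments. Set Strict Implicit. Set Printing Implicit Defensive.
Import Order.TTheory GRing.Theory Num.Theory.

Theorem proposition3p1p4 (R : realType) (A : algType (complex R))
    (u : complex R) (n : nat)
    (X : 'I_n -> A) (Cl : 'I_n -> A) (T : {perm 'I_n} -> A)
    (hXX : forall i j, X i * X j = X j * X i)
    (hCC : forall i, Cl i * Cl i = 1)
    (hCa : forall i j, i != j -> Cl i * Cl j = - (Cl j * Cl i))
    (hT1 : T 1%g = 1)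
    (hTM : forall s t : {perm 'I_n}, T (s * t)%g = T t * T s)
    (hXC : forall i, X i * Cl i = - (Cl i * X i))
    (hXC' : forall i j, i != j -> X i * Cl j = Cl j * X i)
    (hTC : forall (s : {perm 'I_n}) i, T s * Cl i = Cl (s i) * T s)
    (hXT : forall i j : 'I_n, val j = (val i).+1 ->
       X j * T (tperm i j) - T (tperm i j) * X i = u *: (1 - Cl j * Cl i))
    (hXT' : forall i j k : 'I_n, val j = (val i).+1 -> k != i -> k != j ->
       X k * T (tperm i j) = T (tperm i j) * X k)
    (gamma : seq nat) (hgamma : is_composition n gamma)
    (I : {set 'I_n}) (hI : ~~ odd #|I|) :
  let w := T (wgam n gamma) in
  let c := cI Cl I in
  let all_even := forall j, (j < size gamma)%N ->
        ~~ odd #|[set i in I | in_block gamma j i]| in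
  (all_even -> exists eps : complex R, (eps = 1 \/ eps = -1) /\
                  in_comm_span (w * c - eps *: w)) /\
  (~ all_even -> in_comm_span (w * c)).
Proof.
move=> w c all_even.
have hn : sumn gamma = n by case: hgamma.
have hw : forall x : 'I_n, val (wgam n gamma x) = fw 0 gamma x.
  by move=> x; rewrite /wgam wgam_aux_val // hn.
have htk : forall j, (j < size gamma)%N ->
    sumn (take j.+1 gamma) = (sumn (take j gamma) + nth 0%N gamma j)%N.
  by move=> j hj; rewrite (take_nth 0%N hj) sumn_rcons.
have hc : c = cl Cl (enum I) by rewrite /c /cI cI_enum.
split.
- move=> hall.
  suff H : forall N (S : {set 'I_n}), (forall i, i \in S -> (i < N)%N) ->
      (forall j, (j < size gamma)%N -> ~~ odd #|[set i in S | in_block gamma j i]|) ->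
      exists eps : complex R, (eps = 1 \/ eps = -1) /\
        in_comm_span (w * cl Cl (enum S) - eps *: w).
    by rewrite hc; apply: (H n) => // i _; exact: ltn_ord.
  elim=> [|N IH] S hS hpar.
    exists 1; split; first by left.
    have -> : S = set0 by apply/setP => i; rewrite inE; apply/negbTE/negP => /hS.
    rewrite enum_set0 /cl big_nil mulr1 scale1r subrr; exact: span0.
  case: (ltnP N n) => hNn; last first.
    by apply: IH => // i hi; have := ltn_ord i; lia.
  set x := Ordinal hNn.
  case: (boolP (x \in S)) => hxS; last first.
    apply: IH => // i hi; have := hS i hi.
    have : nat_of_ord i != N.
      by apply: contraNneq hxS => e; have -> : x = i by apply: val_inj.
    lia.
  have hNs : (N < sumn gamma)%N by rewrite hn.
  have [j hj hjx] := in_block_ex hNs.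
  have [x' /and3P [hx'S hx'B hx'x]] :
      exists x' : 'I_n, [&& x' \in S, in_block gamma j x' & x' != x].
    apply/existsP; case: (boolP [exists x' : 'I_n, [&& x' \in S, in_block gamma j x' & x' != x]]) => // hne.
    have e : [set i in S | in_block gamma j i] = [set x].
      apply/setP => i; rewrite !inE; case: (eqVneq i x) => [->|hix].
        by rewrite hxS hjx.
      apply/negP => /andP [h1 h2]; move/negP: hne; apply; apply/existsP; exists i.
      by rewrite h1 h2 hix.
    by move: (hpar j hj); rewrite e cards1.
  have hx'N : (x' < N)%N.
    have := hS x' hx'S; have : nat_of_ord x' != N.
      by apply: contra hx'x => /eqP e; apply/eqP/val_inj.
    lia.
  have hyn : (N.-1 < n)%N by lia.
  set y := Ordinal hyn.
  have hy : in_block gamma j N.-1.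
    by move: hx'B hjx; rewrite /in_block; lia.
  have hwy : wgam n gamma y = x.
    apply/val_inj; rewrite hw /= (fw_block (j:=j)) ?add0n //.
    rewrite cf_succ //.
      by move: hy; rewrite /in_block; lia.
      by move: hy; rewrite /in_block; lia.
    by move: hjx hx'N; rewrite /in_block (htk _ hj); lia.
  set S' := tg (tg S x) y.
  have [eps' [heps' hsp']] : exists eps : complex R, (eps = 1 \/ eps = -1) /\
        in_comm_span (w * cl Cl (enum S') - eps *: w).
    apply: IH.
      move=> i; rewrite !in_tg; case: (eqVneq i y) => [->|hiy] /=; first lia.
      case: (eqVneq i x) => [->|hix] /=; first by rewrite hxS.
      move=> hi; have := hS i hi; have : nat_of_ord i != N.
        by apply: contra hix => /eqP e; apply/eqP/val_inj.
      lia.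
    move=> j' hj'; rewrite !odd_tg (negbTE (hpar j' hj')) /=.
    have -> : in_block gamma j' x = in_block gamma j' y.
      apply/idP/idP => h.
        by have := in_block_uniq h hjx => ->.
      by have := in_block_uniq h hy => ->.
    by case: (in_block gamma j' y).
  set Z := w * cl Cl (enum S) * Cl x.
  have hM := span_comm (K := complex R) (Cl x) Z.
  have hZ2 : Z * Cl x = w * cl Cl (enum S) by rewrite /Z -mulrA hCC mulr1.
  have hZ1 : pm (Cl x * Z) (w * cl Cl (enum S')).
    rewrite /Z /w -{1}hwy !mulrA -hTC -!mulrA; apply: pm_mull.
    apply: pm_trans (pm_mull _ (cl_mulr hCC hCa x S)) _; exact: cl_mull.
  rewrite hZ2 in hM.
  case: hZ1 => e; rewrite e in hM.
    by exists eps'; split => //; apply: (sp_comb1 hM hsp').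
  exists (- eps'); split; first by case: heps' => ->; rewrite ?opprK; [right|left].
  by rewrite scaleNr; apply: (sp_comb2 hM hsp').
- move=> hnall.
  have [j hj hodd] : exists2 j, (j < size gamma)%N & odd #|[set i in I | in_block gamma j i]|.
    case: (boolP [exists j : 'I_(size gamma), odd #|[set i in I | in_block gamma j i]|]) => [/existsP [j hj]|hne]; first by exists j.
    exfalso; apply: hnall => j hj; apply/negP => ho; move/negP: hne; apply; apply/existsP.
    by exists (Ordinal hj).
  set off := sumn (take j gamma).
  set m := nth 0%N gamma j.
  have hoff : (off + m <= n)%N.
    rewrite -htk // -hn; have := sumn_take_mono gamma hj; by rewrite take_size.
  set v := cyc n off m.
  set B := [set i : 'I_n | in_block gamma j i].
  have hvv : forall x : 'I_n, val (v x) = cf off m x by move=> x; rewrite cyc_val.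
  have hinB : forall x : 'I_n, (x \in B) = (off <= x < off + m)%N.
    by move=> x; rewrite inE /in_block htk.
  have hvB : forall x, x \in B -> v x = wgam n gamma x.
    move=> x hx; apply/val_inj; rewrite hvv hw (fw_block (j:=j)) ?add0n //.
    by move: hx; rewrite inE.
  have hvout : forall x, x \notin B -> v x = x.
    by move=> x hx; apply/val_inj; rewrite hvv cf_out // -hinB.
  have hvin : forall x, x \in B -> v x \in B.
    by move=> x; rewrite !hinB hvv; exact: cf_in.
  set w' := (wgam n gamma * v^-1)%g.
  have hw'B : forall x, x \in B -> w' x = x.
    by move=> x hx; rewrite /w' permM -hvB // permK.
  have hcomm : (v * w' = w' * v)%g.
    apply/permP => x; rewrite (permM v w' x) (permM w' v x); case: (boolP (x \in B)) => hx.
      by rewrite hw'B ?hvin // hw'B.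
    rewrite hvout //; apply/esym/hvout; apply/negP => hB.
    have e : w' (w' x) = w' x := hw'B _ hB.
    by move: hx; rewrite -(perm_inj e) hB.
  have hwdec : w = T v * T w'.
    by rewrite /w -hTM /w' mulgKV.
  have hTvw : T w' * T v = T v * T w' by rewrite -!hTM hcomm.
  set I1 := I :&: B.
  set I2 := I :\: B.
  have hI1 : odd #|I1|.
    move: hodd; have -> // : [set i in I | in_block gamma j i] = I1.
    by apply/setP => i; rewrite !inE.
  have hI2 : odd #|I2|.
    by move: hI; rewrite -(cardsID B I) -/I1 -/I2 oddD hI1; case: (odd _).
  have hdis : [disjoint I1 & I2].
    rewrite -setI_eq0; apply/eqP/setP => i; rewrite !inE; by case: (in_block gamma j i); rewrite ?andbF.
  set Rr := T w' * cl Cl (enum I2).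
  set z := T v * cl Cl (enum I1).
  have h1 : cl Cl (enum I1) * T w' = T w' * cl Cl (enum I1).
    rewrite (T_cl_comm hTC) // => i; rewrite mem_enum !inE => /andP [_ hi].
    by apply: hw'B; rewrite inE.
  have h2 : cl Cl (enum I2) * T v = T v * cl Cl (enum I2).
    rewrite (T_cl_comm hTC) // => i; rewrite mem_enum !inE => /andP [hi _].
    by apply: hvout; rewrite inE.
  have hRz : Rr * z = T v * T w' * (cl Cl (enum I2) * cl Cl (enum I1)).
    by rewrite /Rr /z -!mulrA (mulrA (cl Cl (enum I2))) h2 -!mulrA !mulrA hTvw.
  have hzR : z * Rr = - (Rr * z).
    rewrite hRz /z /Rr -!mulrA (mulrA (cl Cl (enum I1))) h1 -!mulrA.
    rewrite (cl_anti_set hCC hCa hdis) -signr_odd oddM hI1 hI2 expr1 mulN1r.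
    by rewrite !mulrN !mulrA.
  have hy : pm (w * c) (Rr * z).
    rewrite hc hwdec hRz; apply: pm_mull; exact: cl_split.
  by case: hy => ->; [|apply: spanN]; exact: span_anti hzR.
Qed.
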